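(* Let $J$ be a lex-segment ideal in $R=k[x_1,x_2,x_3]$ with $\dim_k (R/J)_i=h_i$ for every $i\ge 0$. Then for every $i\ge0$, $$\dim_k\left((J:x_3)/J\right)_{i}=h_{i}-h_{i+1}+(h_{i+1})^{-}.$$
   Context: A lex-segment ideal $J$ is a monomial ideal such that for each degree $t$, $J_t$ is spanned by the $\dim_k J_t$ largest monomials of degree $t$ in the lexicographic order with $x_1>x_2>x_3$. For positive integers $h,i$ write uniquely $h=\binom{m_i}{i}+\binom{m_{i-1}}{i-1}+\cdots+\binom{m_j}{j}$ with $m_i>\cdots>m_j\ge j\ge1$, and set $(h)^-=\binom{m_i-1}{i}+\cdots+\binom{m_j-1}{j}$; $(h_{i+1})^-$ is computed with respect to $i+1$, and $(0)^-=0$. *)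

(* Defs.v *)
From mathcomp Require Import all_boot all_order all_algebra.
Set Implicit Arguments. Unset Strict Implicit. Unset Printing Implicit Defensive.

(* A monomial x1^a x2^b x3^c of k[x1,x2,x3] is its exponent triple (a,b,c). *)
Definition mon := (nat * nat * nat)%type.
Definition e1 (m : mon) : nat := m.1.1.
Definition e2 (m : mon) : nat := m.1.2.
Definition e3 (m : mon) : nat := m.2.
Definition mdeg (m : mon) : nat := e1 m + e2 m + e3 m.

Definition mulx1 (m : mon) : mon := ((e1 m).+1, e2 m, e3 m).
Definition mulx2 (m : mon) : mon := (e1 m, (e2 m).+1, e3 m).
Definition mulx3 (m : mon) : mon := (e1 m, e2 m, (e3 m).+1).

(* All monomials of degree t (each exactly once): a k-basis of R_t. *)
Definition mons (t : nat) : seq mon :=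
  [seq (a, b, t - a - b) | a <- iota 0 t.+1, b <- iota 0 (t - a).+1].

Definition lex_gt (m m' : mon) : bool :=
  (e1 m > e1 m') ||
  ((e1 m == e1 m') && ((e2 m > e2 m') || ((e2 m == e2 m') && (e3 m > e3 m')))).

(* A monomial ideal J is given by the set of monomials it contains;
   it is closed under multiplication by the variables. *)
Definition monomial_ideal (J : pred mon) : Prop :=
  forall m, J m -> [/\ J (mulx1 m), J (mulx2 m) & J (mulx3 m)].

Definition lex_segment_ideal (J : pred mon) : Prop :=
  monomial_ideal J /\
  forall m m', mdeg m = mdeg m' -> lex_gt m' m -> J m -> J m'.

Definition quot_dim (J : pred mon) (t : nat) : nat :=
  count (fun m => ~~ J m) (mons t).

(* dim_k ((J : x3)/J)_t: monomials u of degree t with x3 u in J, u notin J. *)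
Definition colon_quot_dim (J : pred mon) (t : nat) : nat :=
  count (fun m => J (mulx3 m) && ~~ J m) (mons t).

Fixpoint max_below (P : pred nat) (n : nat) : nat :=
  match n with
  | 0 => 0
  | n'.+1 => if P n' then n' else max_below P n'
  end.

(* (h)^- with respect to i, via the (greedy) Macaulay representation
   h = C(m_i,i) + C(m_{i-1},i-1) + ... + C(m_j,j), m_i > ... > m_j >= j >= 1:
   m_i is the largest m with C(m,i) <= h. (0)^- = 0. *)
Fixpoint mac_minus (i h : nat) : nat :=
  match i with
  | 0 => 0
  | i'.+1 =>
      if h == 0 then 0 else
      let m := max_below (fun m => 'C(m, i) <= h) (h + i + 1) in
      'C(m.-1, i) + mac_minus i' (h - 'C(m, i))
  end.

Example mm1 : mac_minus 1 5 = 4. Proof. by vm_compute. Qed.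
Example mm2 : mac_minus 2 5 = 2. Proof. by vm_compute. Qed. (* 5 = C(3,2)+C(2,1) -> C(2,2)+C(1,1)=2 *)
Example mm3 : mac_minus 3 7 = 2. Proof. by vm_compute. Qed. (* 7 = C(4,3)+C(3,2) -> C(3,3)+C(2,2) *)
Example mons2 : size (mons 2) = 6. Proof. by []. Qed.

(* Main.v *)
Require Import Defs.
From mathcomp Require Import all_boot all_order all_algebra.
From mathcomp Require Import zify.

Lemma down (J : pred mon) (hJ : lex_segment_ideal J) d a b a' b' :
  a + b <= d -> a' + b' <= d -> (a' < a) || (a' == a) && (b' <= b) ->
  ~~ J (a, b, d - a - b) -> ~~ J (a', b', d - a' - b').
Proof.
move=> h1 h2 hlt; apply: contra => Hj.
case: hJ => _ up.
have [/andP[/eqP ea /eqP eb]|ne] := boolP ((a' == a) && (b' == b)).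
  by rewrite -ea -eb.
apply: (up (a', b', d - a' - b')) => //.
  rewrite /mdeg /e1 /e2 /e3 /=; lia.
rewrite /lex_gt /e1 /e2 /e3 /=.
case/orP: hlt => [->//|/andP[/eqP ea le]].
subst a'; rewrite eqxx ltnn /=.
have: b' != b by rewrite eqxx /= in ne.
by move=> nb; rewrite ltn_neqAle nb le.
Qed.

Lemma charac (J : pred mon) (hJ : lex_segment_ideal J) d :
  exists k r, [/\ k <= d.+1, r <= d - k &
    forall a b, a + b <= d -> ~~ J (a, b, d - a - b) = (a < k) || (a == k) && (b < r)].
Proof.
pose P := fun a => J (a, d - a, 0).
pose k := find P (iota 0 d.+1).
have kle : k <= d.+1 by rewrite -[d.+1](size_iota 0) find_size.
have bk : forall a, a < k -> ~~ J (a, d - a, 0).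
  move=> a ak; have := before_find 0 ak.
  rewrite nth_iota ?add0n; last by lia.
  by rewrite /P => ->.
have [kd|kd] := leqP k d; last first.
  exists k, 0; split => //.
  move=> a b hab; rewrite ltn0 andbF orbF.
  have -> : a < k by lia.
  apply: (@down J hJ d a (d - a)) => //; first by lia.
    by rewrite eqxx /=; lia.
  rewrite (_ : d - a - (d - a) = 0); last by lia.
  apply: bk; lia.
have Pk : J (k, d - k, 0).
  have : has P (iota 0 d.+1) by rewrite has_find size_iota.
  move/(nth_find 0); rewrite nth_iota ?add0n //; lia.
pose Q := fun b => J (k, b, d - k - b).
pose r := find Q (iota 0 (d - k).+1).
have bq : forall b, b < r -> ~~ J (k, b, d - k - b).
  move=> b br; have := before_find 0 br.
  rewrite nth_iota ?add0n; last first.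
    have : r <= (d - k).+1 by rewrite -[(d-k).+1](size_iota 0) find_size.
    lia.
  by rewrite /Q => ->.
have rle : r <= d - k.
  have : has Q (iota 0 (d - k).+1).
    apply/hasP; exists (d - k); first by rewrite mem_iota; lia.
    by rewrite /Q subnn.
  rewrite has_find size_iota; lia.
have Qr : J (k, r, d - k - r).
  have : has Q (iota 0 (d - k).+1).
    apply/hasP; exists (d - k); first by rewrite mem_iota; lia.
    by rewrite /Q subnn.
  move/(nth_find 0); rewrite nth_iota ?add0n //; lia.
exists k, r; split => // a b hab.
have [ak|ka] := ltnP a k.
  rewrite /=; apply: (@down J hJ d a (d - a)) => //; first by lia.
    by rewrite eqxx /=; lia.
  rewrite (_ : d - a - (d - a) = 0); last by lia.
  exact: bk.
idtac.
have [eak|nak] := eqVneq a k.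
  subst a; rewrite /=.
  have [br|rb] := ltnP b r; first exact: bq.
  apply/negbTE/negPn; apply: contraLR Qr => Hb.
  by apply: (@down J hJ d k b) => //; [lia | rewrite eqxx rb orbT].
rewrite /=.
apply/negbTE/negPn; apply: contraLR Pk => Hb.
have -> : (0 = d - k - (d - k)) by lia.
apply: (@down J hJ d a b) => //; first by lia.
by rewrite ltn_neqAle eq_sym nak ka.
Qed.

Definition F (k r t a : nat) : nat :=
  if a < k then (t - a).+1 else if a == k then r else 0.

Lemma count_lt_iota r n : r <= n -> count (fun b => b < r) (iota 0 n) = r.
Proof.
move=> rn; rewrite -(subnKC rn) iotaD count_cat add0n.
rewrite (eq_in_count (a2 := predT)); last by move=> x; rewrite mem_iota.
rewrite count_predT size_iota (eq_in_count (a2 := pred0)); last first.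
  by move=> x; rewrite mem_iota => /andP[h _]; rewrite /= ltnNge h.
by rewrite count_pred0 addn0.
Qed.

Lemma count_mons (Q : pred mon) t k r :
  (forall a b, a + b <= t -> Q (a, b, t - a - b) = (a < k) || (a == k) && (b < r)) ->
  (k <= t -> r <= (t - k).+1) ->
  count Q (mons t) = \sum_(0 <= a < t.+1) F k r t a.
Proof.
move=> hQ hr; rewrite /mons count_flatten sumnE big_map.
rewrite /index_iota subn0 big_map; apply: eq_big_seq => a; rewrite mem_iota add0n => /andP[_ at_].
rewrite count_map /F.
rewrite (eq_in_count (a2 := fun b => (a < k) || (a == k) && (b < r))); last first.
  move=> b; rewrite mem_iota add0n => /andP[_ hb] /=; apply: hQ; lia.
have [ak|ka] := ltnP a k.
  by rewrite /= (eq_count (a2 := predT)) // count_predT size_iota.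
have [eak|nak] := eqVneq a k.
  subst a; rewrite (eq_count (a2 := fun b => b < r)) //.
  by rewrite count_lt_iota //; apply: hr; lia.
by rewrite (eq_count (a2 := pred0)) // count_pred0.
Qed.

Definition S (d k : nat) : nat := \sum_(0 <= a < k) (d.+1 - a).

Lemma S_recl d k : S d.+1 k.+1 = d.+2 + S d k.
Proof.
by rewrite /S big_nat_recl // subn0.
Qed.

Lemma S_recr d k : S d k.+1 = S d k + (d.+1 - k).
Proof. by rewrite /S big_nat_recr. Qed.

Lemma S_mono d k k' : k <= k' -> S d k <= S d k'.
Proof.
move=> kk; rewrite /S (big_cat_nat (leq0n k) kk) /=; exact: leq_addr.
Qed.

Lemma S_tot d : S d d.+1 = 'C(d.+2, d).
Proof.
elim: d => [|d IH]; first by rewrite /S big_nat1.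
by rewrite S_recl IH binS binSn addnC.
Qed.

Lemma max_below_eq (P : pred nat) n m0 :
  m0 < n -> P m0 -> (forall m, m0 < m < n -> ~~ P m) -> max_below P n = m0.
Proof.
elim: n => [//|n IH] hn hp hm /=.
have [e|ne] := eqVneq n m0; first by subst; rewrite hp.
have hn' : m0 < n by rewrite ltn_neqAle eq_sym ne -ltnS.
rewrite (negbTE (hm n _)); last by rewrite hn' ltnSn.
apply: IH => // m /andP[h1 h2]; apply: hm; rewrite h1 /=; exact: ltnW.
Qed.

Lemma mac0 i : mac_minus i 0 = 0.
Proof. by case: i. Qed.

Lemma mac_step i h m0 : 0 < h -> m0 < h + i.+1 + 1 ->
  'C(m0, i.+1) <= h < 'C(m0.+1, i.+1) ->
  mac_minus i.+1 h = 'C(m0.-1, i.+1) + mac_minus i (h - 'C(m0, i.+1)).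
Proof.
move=> h0 hm /andP[c1 c2].
rewrite /= (negbTE (lt0n_neq0 h0)).
rewrite (@max_below_eq _ _ m0) //.
move=> m /andP[h1 _]; rewrite -ltnNge.
apply: leq_trans c2 _; exact: leq_bin2l.
Qed.

Lemma mac_S d k r : k <= d.+1 -> r <= d - k -> (0 < d) || (k == 0) ->
  mac_minus d (S d k + r) = k.
Proof.
elim: d k r => [|d IH] k r hk hr hd.
  by move: hd => /= /eqP ->.
have [ek|nk] := eqVneq k d.+2.
  subst k; have -> : r = 0 by lia.
  rewrite addn0 S_tot (@mac_step d _ d.+3).
  - by rewrite binSn /= subnn mac0 addn0.
  - by rewrite bin_gt0; lia.
  - rewrite binS binSn; lia.
  - have hh : 0 < 'C(d.+3, d) by rewrite bin_gt0; lia.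
    rewrite leqnn /= [X in _ < X]binS; lia.
case: k hk hr hd nk => [|k] hk hr hd nk.
  rewrite /S big_geq // add0n.
  case: r hr => [|r] hr; first by rewrite mac0.
  rewrite (@mac_step d _ d.+1) //; first last.
  - by rewrite binn binSn /=; lia.
  - lia.
  rewrite binn bin_small // add0n subn1 /=.
  have := IH 0 r; rewrite /S big_geq // add0n => -> //; lia.
have kd : k <= d by lia.
have Sge : d.+2 <= S d.+1 k.+1 by rewrite S_recl leq_addr.
rewrite (@mac_step d _ d.+2); first last.
- rewrite binSn; apply/andP; split; first lia.
  have hm : S d.+1 k.+2 <= S d.+1 d.+2 by apply: S_mono; lia.
  move: hm; rewrite S_tot (S_recr _ k.+1); lia.
- have : d.+2 <= S d.+1 k.+1 + r by lia.
  have : 'C(d.+2, d.+1) = d.+2 by rewrite binSn.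
  lia.
- lia.
rewrite binn binSn S_recl -addnA addKn IH //; lia.
Qed.

Lemma sum_lt n k : \sum_(0 <= a < n) (a < k : nat) = minn k n.
Proof.
elim: n => [|n IH]; first by rewrite big_geq // minn0.
rewrite big_nat_recr //= IH; case: ltnP => h /=; lia.
Qed.

Lemma sum_F_S d k r : k <= d.+1 -> r <= d - k ->
  \sum_(0 <= a < d.+1) F k r d a = S d k + r.
Proof.
move=> hk hr; rewrite (big_cat_nat (leq0n k) hk) /=.
congr (_ + _).
  apply: eq_big_nat => a /andP[_ ha]; rewrite /F ha; lia.
have [e|ne] := eqVneq k d.+1.
  by rewrite e big_geq //; lia.
have kd : k < d.+1 by rewrite ltn_neqAle ne.
rewrite big_ltn // /F ltnn eqxx big_nat_cond big1 ?addn0 //.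
move=> a /andP[/andP[h1 h2] _].
by rewrite ltnNge (ltnW h1) /= gtn_eqF.
Qed.

Lemma count_split (J : pred mon) (hJ : lex_segment_ideal J) s :
  count (fun m => ~~ J m) s =
  count (fun m => J (mulx3 m) && ~~ J m) s + count (fun m => ~~ J (mulx3 m)) s.
Proof.
elim: s => [//|x s IH] /=; rewrite IH.
case: hJ => hI _; have := hI x.
case: (J x); case: (J (mulx3 x)) => //= H.
  by case: H.
lia.
Qed.

Theorem lemma4p2 (J : pred mon) (h : nat -> nat)
  (hJ : lex_segment_ideal J) (hh : forall i, quot_dim J i = h i) :
  forall i : nat,
    (Posz (colon_quot_dim J i) =
      Posz (h i) - Posz (h i.+1) + Posz (mac_minus i.+1 (h i.+1)))%R.
Proof.
move=> i.
have [k [r [hk hr hc]]] := charac J hJ i.+1.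
have Hd : h i.+1 = \sum_(0 <= a < i.+2) F k r i.+1 a.
  rewrite -hh /quot_dim; apply: count_mons => //; lia.
have Hc : count (fun m => ~~ J (mulx3 m)) (mons i) = \sum_(0 <= a < i.+1) F k r i a.
  apply: count_mons; last by lia.
  move=> a b hab; rewrite /mulx3 /e1 /e2 /e3 /=.
  have -> : (i - a - b).+1 = i.+1 - a - b by lia.
  apply: hc; lia.
have Hdc : h i.+1 = count (fun m => ~~ J (mulx3 m)) (mons i) + k.
  rewrite Hd Hc big_nat_recr //=.
  rewrite (eq_big_nat _ _ (F2 := fun a => F k r i a + (a < k : nat))); last first.
    move=> a /andP[_ ha]; rewrite /F.
    case: (ltnP a k) => hak /=; first lia.
    by case: eqP => _; lia.
  rewrite big_split /= sum_lt /F.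
  case: (ltnP i.+1 k) => h1 /=; first by lia.
  case: eqP => h2; lia.
have Hm : mac_minus i.+1 (h i.+1) = k.
  rewrite Hd sum_F_S //; first by apply: mac_S => //; lia.
have Hi : h i = colon_quot_dim J i + count (fun m => ~~ J (mulx3 m)) (mons i).
  by rewrite -hh /quot_dim /colon_quot_dim (count_split J hJ).
rewrite Hm Hdc Hi.
move: (colon_quot_dim J i) (count _ _) => x y.
rewrite !PoszD; lia.
Qed.
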